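(* Let $\|\cdot\|$ be a URTC-norm on $\mathbb{R}^2$ with unit sphere $S$. Define $f\colon S\to S$ by letting $f(z)$ be the unique point of $S$ such that $\|z-f(z)\|=1$ and the triangle $(0,z,f(z))$ is positively oriented. Then $f$ is continuous.
   Context: A norm $\|\cdot\|$ on $\mathbb{R}^2$ is called a URTC-norm if for every $a,b\in\mathbb{R}^2$ with $\|a-b\|=1$ the system $\|a-x\|=1$, $\|b-x\|=1$ is satisfied by exactly two points $x\in\mathbb{R}^2$ (for $a=0$, $b=z\in S$ these two points lie on opposite sides of the line through $0$ and $z$, so $f$ is well defined). $S=\{x:\|x\|=1\}$. A triangle $(p,q,r)$ is positively oriented if its vertices are in counterclockwise order. *)

(* Defs.v *)
From Stdlib Require Import Reals.
Open Scope R_scope.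

Definition pt := (R * R)%type.

Definition padd (a b : pt) : pt := (fst a + fst b, snd a + snd b).
Definition psub (a b : pt) : pt := (fst a - fst b, snd a - snd b).
Definition pscal (t : R) (a : pt) : pt := (t * fst a, t * snd a).

Definition is_norm (N : pt -> R) : Prop :=
  (forall x, 0 <= N x) /\
  (forall x, N x = 0 -> x = (0, 0)) /\
  (forall t x, N (pscal t x) = Rabs t * N x) /\
  (forall x y, N (padd x y) <= N x + N y).

Definition URTC (N : pt -> R) : Prop :=
  is_norm N /\
  forall a b : pt, N (psub a b) = 1 ->
    exists x1 x2 : pt, x1 <> x2 /\
      forall x : pt, (N (psub a x) = 1 /\ N (psub b x) = 1) <-> (x = x1 \/ x = x2).

Definition pos_oriented (z w : pt) : Prop := fst z * snd w - snd z * fst w > 0.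

Definition edist (a b : pt) : R :=
  sqrt ((fst a - fst b) ^ 2 + (snd a - snd b) ^ 2).

Definition sphere (N : pt -> R) (x : pt) : Prop := N x = 1.

Definition continuous_on_set (S : pt -> Prop) (f : pt -> pt) : Prop :=
  forall z, S z -> forall eps, eps > 0 -> exists delta, delta > 0 /\
    forall w, S w -> edist w z < delta -> edist (f w) (f z) < eps.

(* Main.v *)
Require Import Defs.
From Stdlib Require Import Reals Lra Psatz Classical ClassicalEpsilon.
Open Scope R_scope.

Lemma abs_between x b : Rabs x <= b -> -b <= x <= b.
Proof. unfold Rabs; destruct (Rcase_abs x); lra. Qed.

Section NormFacts.
Variable N : pt -> R.
Hypothesis HN : is_norm N.

Lemma N_ge0 x : 0 <= N x. Proof. destruct HN as [h _]; apply h. Qed.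
Lemma N_scal t x : N (pscal t x) = Rabs t * N x.
Proof. destruct HN as [_ [_ [h _]]]; apply h. Qed.
Lemma N_tri x y : N (padd x y) <= N x + N y.
Proof. destruct HN as [_ [_ [_ h]]]; apply h. Qed.
Lemma N_def x : N x = 0 -> x = (0,0).
Proof. destruct HN as [_ [h _]]; apply h. Qed.

Lemma N_coords a b : N (a,b) <= Rabs a * N (1,0) + Rabs b * N (0,1).
Proof.
  replace (a,b) with (padd (pscal a (1,0)) (pscal b (0,1)))
    by (unfold padd, pscal; simpl; f_equal; ring).
  rewrite <- !N_scal. apply N_tri.
Qed.

Definition KN := N (1,0) + N (0,1).
Lemma KN_ge0 : 0 <= KN.
Proof. unfold KN; pose proof (N_ge0 (1,0)); pose proof (N_ge0 (0,1)); lra. Qed.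

Lemma N_bound a b : N (a,b) <= KN * (Rabs a + Rabs b).
Proof.
  pose proof (N_coords a b). unfold KN.
  pose proof (N_ge0 (1,0)); pose proof (N_ge0 (0,1)).
  pose proof (Rabs_pos a); pose proof (Rabs_pos b).
  assert (Rabs a * N(0,1) >= 0) by (apply Rle_ge, Rmult_le_pos; lra).
  assert (Rabs b * N(1,0) >= 0) by (apply Rle_ge, Rmult_le_pos; lra).
  nra.
Qed.

Lemma N_lip a1 a2 b1 b2 :
  Rabs (N (a1,a2) - N (b1,b2)) <= KN * (Rabs (a1 - b1) + Rabs (a2 - b2)).
Proof.
  assert (E1: N (a1,a2) <= N (b1,b2) + N (a1-b1, a2-b2)).
  { replace (a1,a2) with (padd (b1,b2) (a1-b1,a2-b2))
      by (unfold padd; simpl; f_equal; ring). apply N_tri. }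
  assert (E2: N (b1,b2) <= N (a1,a2) + N (b1-a1, b2-a2)).
  { replace (b1,b2) with (padd (a1,a2) (b1-a1,b2-a2)) at 1
      by (unfold padd; simpl; f_equal; ring). apply N_tri. }
  pose proof (N_bound (a1-b1) (a2-b2)).
  pose proof (N_bound (b1-a1) (b2-a2)).
  rewrite (Rabs_minus_sym b1 a1), (Rabs_minus_sym b2 a2) in H0.
  apply Rabs_le; lra.
Qed.

Lemma N_opp a b : N (-a, -b) = N (a, b).
Proof.
  replace (-a,-b) with (pscal (-1) (a,b)) by (unfold pscal; simpl; f_equal; ring).
  rewrite N_scal. rewrite Rabs_left by lra. ring.
Qed.

Lemma lip_cont (g : R -> R) L : 0 <= L ->
  (forall x y, Rabs (g x - g y) <= L * Rabs (x - y)) -> forall c, continuity_pt g c.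
Proof.
  intros HL Hg c e He. exists (e / (L+1)). split.
  { apply Rdiv_lt_0_compat; lra. }
  intros x [_ Hx]. simpl in *. unfold R_dist in *.
  eapply Rle_lt_trans. apply Hg.
  apply Rle_lt_trans with ((L+1) * Rabs (x - c)).
  { pose proof (Rabs_pos (x-c)); nra. }
  apply Rmult_lt_reg_l with (/ (L+1)). { apply Rinv_0_lt_compat; lra. }
  rewrite <- Rmult_assoc, Rinv_l by lra. unfold Rdiv in Hx. lra.
Qed.

Lemma N_lower : exists m, 0 < m /\ forall a b, m * Rabs a <= N (a,b) /\ m * Rabs b <= N (a,b).
Proof.
  assert (C1: forall c, -1 <= c <= 1 -> continuity_pt (fun t => N (1,t)) c).
  { intros c _. apply (lip_cont _ KN KN_ge0). intros x y.
    eapply Rle_trans. apply N_lip. rewrite Rminus_diag, Rabs_R0.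
    pose proof KN_ge0; lra. }
  assert (C2: forall c, -1 <= c <= 1 -> continuity_pt (fun t => N (t,1)) c).
  { intros c _. apply (lip_cont _ KN KN_ge0). intros x y.
    eapply Rle_trans. apply N_lip. rewrite Rminus_diag, Rabs_R0.
    pose proof KN_ge0; lra. }
  destruct (continuity_ab_min _ (-1) 1 ltac:(lra) C1) as [t1 [Ht1 Rt1]].
  destruct (continuity_ab_min _ (-1) 1 ltac:(lra) C2) as [t2 [Ht2 Rt2]].
  assert (P1: 0 < N (1,t1)).
  { destruct (N_ge0 (1,t1)) as [h|h]; auto. symmetry in h.
    apply N_def in h. inversion h. lra. }
  assert (P2: 0 < N (t2,1)).
  { destruct (N_ge0 (t2,1)) as [h|h]; auto. symmetry in h.
    apply N_def in h. inversion h. lra. }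
  exists (Rmin (N (1,t1)) (N (t2,1))). split.
  { apply Rmin_glb_lt; auto. }
  assert (Main: forall a b, Rmin (N (1,t1)) (N (t2,1)) * Rmax (Rabs a) (Rabs b) <= N (a,b)).
  { intros a b.
    pose proof (Rmin_l (N (1,t1)) (N (t2,1))). pose proof (Rmin_r (N (1,t1)) (N (t2,1))).
    destruct (Rle_dec (Rabs b) (Rabs a)) as [Hab|Hab].
    - rewrite Rmax_left by lra.
      destruct (Req_dec a 0) as [Ha|Ha].
      + subst. rewrite Rabs_R0, Rmult_0_r. apply N_ge0.
      + replace (a,b) with (pscal a (1, b/a)) by (unfold pscal; simpl; f_equal; field; auto).
        rewrite N_scal.
        assert (-1 <= b/a <= 1).
        { unfold Rdiv. rewrite <- (Rabs_pos_eq (Rabs a)) in Hab by apply Rabs_pos.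
          assert (Rabs (b / a) <= 1).
          { unfold Rdiv; rewrite Rabs_mult, Rabs_inv.
            apply Rmult_le_reg_r with (Rabs a). apply Rabs_pos_lt; auto.
            rewrite Rmult_assoc, Rinv_l by (apply Rabs_no_R0; auto).
            rewrite Rabs_Rabsolu in Hab. lra. }
          apply abs_between in H1. exact H1. }
        pose proof (Ht1 (b/a) H1). simpl in H2.
        pose proof (Rabs_pos a). nra.
    - rewrite Rmax_right by lra.
      destruct (Req_dec b 0) as [Hb|Hb].
      + subst. rewrite Rabs_R0 in Hab. pose proof (Rabs_pos a). lra.
      + replace (a,b) with (pscal b (a/b, 1)) by (unfold pscal; simpl; f_equal; field; auto).
        rewrite N_scal.
        assert (-1 <= a/b <= 1).
        { assert (Rabs (a / b) <= 1).
          { unfold Rdiv; rewrite Rabs_mult, Rabs_inv.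
            apply Rmult_le_reg_r with (Rabs b). apply Rabs_pos_lt; auto.
            rewrite Rmult_assoc, Rinv_l by (apply Rabs_no_R0; auto). lra. }
          apply abs_between in H1. exact H1. }
        pose proof (Ht2 (a/b) H1). simpl in H2.
        pose proof (Rabs_pos b). nra. }
  intros a b. pose proof (Main a b).
  pose proof (Rmax_l (Rabs a) (Rabs b)); pose proof (Rmax_r (Rabs a) (Rabs b)).
  assert (0 < Rmin (N (1,t1)) (N (t2,1))) by (apply Rmin_glb_lt; auto).
  split; nra.
Qed.
End NormFacts.

Lemma uniq_f (N : pt -> R) (f : pt -> pt) :
  URTC N ->
  (forall z, sphere N z ->
     sphere N (f z) /\ N (psub z (f z)) = 1 /\ pos_oriented z (f z)) ->
  forall z, N z = 1 -> forall w, N w = 1 -> N (psub z w) = 1 ->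
  0 <= fst z * snd w - snd z * fst w -> w = f z.
Proof.
  intros [HN HU] Hf z Hz w Hw Hzw Hdet.
  destruct (Hf z Hz) as [Sf [Df Of]]. unfold sphere, pos_oriented in *.
  assert (Z0: forall x, N (psub (0,0) x) = N x).
  { intros [a b]; unfold psub; simpl. replace (0-a) with (-a) by ring.
    replace (0-b) with (-b) by ring. apply N_opp; auto. }
  destruct (HU z (0,0)) as [x1 [x2 [Hne Hc]]].
  { destruct z as [a b]; unfold psub; simpl. rewrite !Rminus_0_r. auto. }
  set (g := psub z (f z)).
  assert (Mg: g = x1 \/ g = x2).
  { apply Hc. split.
    - unfold g. replace (psub z (psub z (f z))) with (f z). auto.
      generalize (f z); intros [p q]; destruct z as [a b]; unfold psub; simpl; f_equal; ring.
    - rewrite Z0. auto. }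
  assert (Mf: f z = x1 \/ f z = x2).
  { apply Hc. split; auto. rewrite Z0; auto. }
  assert (Mw: w = x1 \/ w = x2).
  { apply Hc. split; auto. rewrite Z0; auto. }
  assert (Dg: fst z * snd g - snd z * fst g = - (fst z * snd (f z) - snd z * fst (f z))).
  { unfold g; generalize (f z); intros [p q]; destruct z as [a b]; unfold psub; simpl; ring. }
  assert (Ng1: g <> f z). { intro E. rewrite E in Dg. lra. }
  assert (Ng2: g <> w). { intro E. rewrite E in Dg. lra. }
  destruct Mg as [-> | ->]; destruct Mf as [Ef | Ef]; destruct Mw as [-> | ->];
    rewrite ?Ef in *; congruence.
Qed.

Lemma abs_lt_between x b : Rabs x < b -> -b < x < b.
Proof. unfold Rabs; destruct (Rcase_abs x); lra. Qed.

Lemma small_inv e : 0 < e -> exists K, forall n, (K <= n)%nat -> / INR (S n) < e.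
Proof.
  intros He. destruct (archimed_cor1 e He) as [K [HK K0]]. exists K. intros n Hn.
  eapply Rle_lt_trans; [|exact HK].
  apply Rinv_le_contravar. apply lt_0_INR; auto. apply le_INR; lia.
Qed.

Lemma inv_pos n : 0 < / INR (S n).
Proof. apply Rinv_0_lt_compat, lt_0_INR; lia. Qed.

Lemma edist_ge a b : Rabs (fst a - fst b) <= edist a b /\ Rabs (snd a - snd b) <= edist a b.
Proof.
  unfold edist. split; rewrite <- sqrt_Rsqr_abs; apply sqrt_le_1_alt; unfold Rsqr;
  pose proof (pow2_ge_0 (fst a - fst b)); pose proof (pow2_ge_0 (snd a - snd b)); nra.
Qed.

Lemma edist_le a b : edist a b <= Rabs (fst a - fst b) + Rabs (snd a - snd b).
Proof.
  unfold edist. pose proof (Rabs_pos (fst a - fst b)); pose proof (Rabs_pos (snd a - snd b)).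
  rewrite <- (sqrt_pow2 (Rabs (fst a - fst b) + Rabs (snd a - snd b))) by lra.
  apply sqrt_le_1_alt. rewrite <- (pow2_abs (fst a - fst b)), <- (pow2_abs (snd a - snd b)).
  nra.
Qed.

Lemma edist_0 a : edist a a = 0.
Proof. unfold edist. rewrite !Rminus_diag. replace (0^2+0^2) with 0 by ring. apply sqrt_0. Qed.

Lemma det_bound a b c d : Rabs (a*b - c*d) <= Rabs a * Rabs (b-d) + Rabs (a-c) * Rabs d.
Proof.
  replace (a*b - c*d) with (a*(b-d) + (a-c)*d) by ring.
  rewrite <- !Rabs_mult. apply Rabs_triang.
Qed.

Lemma closed_eq a b C : (forall e, 0 < e -> Rabs (a - b) <= C * e) -> a = b.
Proof.
  intros H. destruct (Req_dec a b) as [|Hn]; auto. exfalso.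
  assert (P: 0 < Rabs (a-b)) by (apply Rabs_pos_lt; lra).
  destruct (Rle_dec C 0).
  - pose proof (H 1 ltac:(lra)); lra.
  - pose proof (H (Rabs (a-b) / (2*C)) ltac:(apply Rdiv_lt_0_compat; lra)).
    replace (C * (Rabs (a-b) / (2*C))) with (Rabs (a-b)/2) in H0 by (field; lra). lra.
Qed.

Lemma closed_ge a C : (forall e, 0 < e -> - (C * e) <= a) -> 0 <= a.
Proof.
  intros H. destruct (Rle_dec 0 a) as [|Hn]; auto. exfalso.
  destruct (Rle_dec C 0).
  - pose proof (H 1 ltac:(lra)); lra.
  - pose proof (H (- a / (2*C)) ltac:(apply Rdiv_lt_0_compat; lra)).
    replace (C * (- a / (2*C))) with (- a/2) in H0 by (field; lra). lra.
Qed.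

Theorem lemma3 (N : pt -> R) (f : pt -> pt) :
  URTC N ->
  (forall z, sphere N z ->
     sphere N (f z) /\ N (psub z (f z)) = 1 /\ pos_oriented z (f z)) ->
  continuous_on_set (sphere N) f.
Proof.
  intros HU Hf z Hz eps Heps. pose proof HU as [HN _].
  apply NNPP; intro Hno.
  assert (Hseq: forall n:nat, exists w, sphere N w /\ edist w z < / INR (S n) /\
                                   eps <= edist (f w) (f z)).
  { intro n. apply NNPP; intro H. apply Hno. exists (/INR (S n)). split. apply inv_pos.
    intros w Sw Dw. destruct (Rlt_dec (edist (f w) (f z)) eps) as [|h]; auto.
    exfalso; apply H; exists w; repeat split; auto; lra. }
  pose (W := fun n => proj1_sig (constructive_indefinite_description _ (Hseq n))).
  assert (WP: forall n, sphere N (W n) /\ edist (W n) z < / INR (S n) /\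
                                   eps <= edist (f (W n)) (f z)).
  { intro n. exact (proj2_sig (constructive_indefinite_description _ (Hseq n))). }
  destruct (N_lower N HN) as [m [Hm Hlow]].
  assert (Bd: forall x, N x = 1 -> -/m <= fst x <= /m /\ -/m <= snd x <= /m).
  { intros [a b] Hx. simpl. destruct (Hlow a b) as [h1 h2]. rewrite Hx in h1, h2.
    assert (Rabs a <= /m). { apply Rmult_le_reg_l with m; auto. rewrite Rinv_r; lra. }
    assert (Rabs b <= /m). { apply Rmult_le_reg_l with m; auto. rewrite Rinv_r; lra. }
    split; apply abs_between; auto. }
  set (X := fun n => f (W n)).
  assert (XS: forall n, N (X n) = 1 /\ N (psub (W n) (X n)) = 1 /\ pos_oriented (W n) (X n)).
  { intro n. destruct (WP n) as [S _]. exact (Hf _ S). }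
  destruct (Bolzano_Weierstrass (fun n => fst (X n)) _ (compact_P3 (-/m) (/m))) as [l1 Hl1].
  { intro n. apply Bd, XS. }
  assert (Hsub: forall k, exists p, (k <= p)%nat /\ Rabs (fst (X p) - l1) < / INR (S k)).
  { intro k. destruct (Hl1 (fun y => Rabs (y - l1) < / INR (S k)) k) as [p Hp].
    - exists (mkposreal _ (inv_pos k)). unfold included, disc. simpl. auto.
    - exists p; exact Hp. }
  pose (nk := fun k => proj1_sig (constructive_indefinite_description _ (Hsub k))).
  assert (nkP: forall k, (k <= nk k)%nat /\ Rabs (fst (X (nk k)) - l1) < / INR (S k)).
  { intro k. exact (proj2_sig (constructive_indefinite_description _ (Hsub k))). }
  destruct (Bolzano_Weierstrass (fun k => snd (X (nk k))) _ (compact_P3 (-/m) (/m))) as [l2 Hl2].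
  { intro n. apply Bd, XS. }
  assert (Clu: forall e, 0 < e -> exists p, Rabs (fst (X p) - l1) < e /\ Rabs (snd (X p) - l2) < e
     /\ Rabs (fst (W p) - fst z) < e /\ Rabs (snd (W p) - snd z) < e).
  { intros e He. destruct (small_inv e He) as [K HK].
    destruct (Hl2 (fun y => Rabs (y - l2) < e) K) as [q [Hq Vq]].
    - exists (mkposreal _ He). unfold included, disc. simpl. auto.
    - exists (nk q). destruct (nkP q) as [h1 h2].
      destruct (WP (nk q)) as [_ [Dw _]]. destruct (edist_ge (W (nk q)) z) as [g1 g2].
      pose proof (HK q Hq). pose proof (HK (nk q) ltac:(lia)).
      repeat split; lra. }
  set (w := (l1, l2)).
  assert (Nw: N w = 1).
  { apply (closed_eq _ _ (2 * KN N)). intros e He.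
    destruct (Clu e He) as [p [a1 [a2 _]]].
    destruct (XS p) as [Xp _]. rewrite <- Xp, (surjective_pairing (X p)).
    eapply Rle_trans. apply N_lip; auto.
    rewrite (Rabs_minus_sym l1), (Rabs_minus_sym l2).
    pose proof (KN_ge0 N HN). nra. }
  assert (Nzw: N (psub z w) = 1).
  { apply (closed_eq _ _ (4 * KN N)). intros e He.
    destruct (Clu e He) as [p [a1 [a2 [a3 a4]]]].
    destruct (XS p) as [_ [Xp _]]. rewrite <- Xp. unfold psub, w. simpl.
    eapply Rle_trans. apply N_lip; auto.
    apply abs_lt_between in a1, a2, a3, a4.
    assert (Rabs (fst z - l1 - (fst (W p) - fst (X p))) <= 2*e) by (apply Rabs_le; lra).
    assert (Rabs (snd z - l2 - (snd (W p) - snd (X p))) <= 2*e) by (apply Rabs_le; lra).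
    pose proof (KN_ge0 N HN). nra. }
  assert (Dw: 0 <= fst z * snd w - snd z * fst w).
  { apply (closed_ge _ (4 * /m)). intros e He.
    destruct (Clu e He) as [p [a1 [a2 [a3 a4]]]].
    destruct (XS p) as [_ [_ Op]]. unfold pos_oriented in Op. unfold w; simpl.
    pose proof (det_bound (fst z) l2 (fst (W p)) (snd (X p))) as d1.
    pose proof (det_bound (snd z) l1 (snd (W p)) (fst (X p))) as d2.
    destruct (Bd z Hz) as [bz1 bz2]. destruct (Bd (X p) (proj1 (XS p))) as [bx1 bx2].
    assert (Rabs (fst z) <= /m) by (apply Rabs_le; lra).
    assert (Rabs (snd z) <= /m) by (apply Rabs_le; lra).
    assert (Rabs (fst (X p)) <= /m) by (apply Rabs_le; lra).
    assert (Rabs (snd (X p)) <= /m) by (apply Rabs_le; lra).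
    rewrite Rabs_minus_sym in a1, a2.
    rewrite (Rabs_minus_sym (fst z)) in d1. rewrite (Rabs_minus_sym (snd z)) in d2.
    pose proof (Rabs_pos (fst z)); pose proof (Rabs_pos (snd z)).
    pose proof (Rabs_pos (fst (X p))); pose proof (Rabs_pos (snd (X p))).
    pose proof (Rabs_pos (l1 - fst (X p))); pose proof (Rabs_pos (l2 - snd (X p))).
    pose proof (Rabs_pos (fst (W p) - fst z)); pose proof (Rabs_pos (snd (W p) - snd z)).
    assert (Rabs (fst z) * Rabs (l2 - snd (X p)) <= /m * e) by (apply Rmult_le_compat; lra).
    assert (Rabs (snd z) * Rabs (l1 - fst (X p)) <= /m * e) by (apply Rmult_le_compat; lra).
    assert (Rabs (fst (W p) - fst z) * Rabs (snd (X p)) <= e * /m) by (apply Rmult_le_compat; lra).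
    assert (Rabs (snd (W p) - snd z) * Rabs (fst (X p)) <= e * /m) by (apply Rmult_le_compat; lra).
    apply abs_between in d1, d2. lra. }
  assert (Ew: w = f z) by (apply (uniq_f N f HU Hf z Hz w Nw Nzw Dw)).
  destruct (Clu (eps/2) ltac:(lra)) as [p [a1 [a2 _]]].
  destruct (WP p) as [_ [_ Ep]]. change (f (W p)) with (X p) in Ep. rewrite <- Ew in Ep.
  pose proof (edist_le (X p) w) as Hd. unfold w in Hd, Ep; simpl in Hd. lra.
Qed.
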